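(* A magma is free if and only if it is initial and equidecomposable.
   Context: A magma is a set $M$ with a binary operation $+$. $M$ is equidecomposable if for all $x,y,x',y'\in M$, $x+y=x'+y'$ implies $x=x'$ and $y=y'$. The set of indecomposable elements of $M$ is $M\setminus(M+M)$ (elements not of the form $x+y$). For $X\subseteq M$, $\langle X\rangle$ is the least submagma of $M$ containing $X$. The initial part of $M$ is $\mathfrak{I}(M)=\langle M\setminus(M+M)\rangle$, and $M$ is initial if $\mathfrak{I}(M)=M$. A magma is free if it is isomorphic to the free magma $\mathbb{M}_A$ on some non-empty set $A$, i.e. the magma of non-associative words (fully parenthesized formal sums) over $A$ with $x+y=(x,y)$. *)

(* Defs.v *)
Set Implicit Arguments.

Definition equidecomposable (M : Type) (op : M -> M -> M) : Prop :=
  forall x y x' y' : M, op x y = op x' y' -> x = x' /\ y = y'.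

Definition indecomposable (M : Type) (op : M -> M -> M) (z : M) : Prop :=
  ~ (exists x y : M, op x y = z).

Definition submagma (M : Type) (op : M -> M -> M) (S : M -> Prop) : Prop :=
  forall x y : M, S x -> S y -> S (op x y).

Definition generated (M : Type) (op : M -> M -> M) (X : M -> Prop) (z : M) : Prop :=
  forall S : M -> Prop, submagma op S -> (forall x, X x -> S x) -> S z.

Definition initial_part (M : Type) (op : M -> M -> M) : M -> Prop :=
  generated op (indecomposable op).

Definition initial (M : Type) (op : M -> M -> M) : Prop :=
  forall z : M, initial_part op z.

Inductive free_magma (A : Type) : Type :=
| fm_leaf : A -> free_magma A
| fm_node : free_magma A -> free_magma A -> free_magma A.

Definition magma_iso (M N : Type) (opM : M -> M -> M) (opN : N -> N -> N)
  (f : M -> N) : Prop :=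
  (forall x y : M, f (opM x y) = opN (f x) (f y)) /\
  (forall x y : M, f x = f y -> x = y) /\
  (forall z : N, exists x : M, f x = z).

Definition free (M : Type) (op : M -> M -> M) : Prop :=
  exists (A : Type), inhabited A /\
    exists f : free_magma A -> M, magma_iso (@fm_node A) op f.

(* Main.v *)
Require Import Defs.
From Stdlib Require Import Classical ProofIrrelevance.

Theorem theorem4p5 (M : Type) (op : M -> M -> M) (HM : inhabited M) :
  free op <-> (initial op /\ equidecomposable op).
Proof.
  split.
  - intros [A [_ [f [Hhom [Hinj Hsurj]]]]]. split.
    + intros z. destruct (Hsurj z) as [w <-].
      induction w as [a|u IHu v IHv].
      * intros S _ HX. apply HX. intros [x [y Hxy]].
        destruct (Hsurj x) as [u <-]. destruct (Hsurj y) as [v <-].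
        rewrite <- Hhom in Hxy. apply Hinj in Hxy. discriminate.
      * rewrite Hhom. intros S HS HX. apply HS; [apply IHu|apply IHv]; assumption.
    + intros x y x' y' H.
      destruct (Hsurj x) as [a <-]. destruct (Hsurj y) as [b <-].
      destruct (Hsurj x') as [a' <-]. destruct (Hsurj y') as [b' <-].
      rewrite <- !Hhom in H. apply Hinj in H. injection H as -> ->. split; reflexivity.
  - intros [Hini Heq].
    set (A := {z : M | indecomposable op z}).
    exists A. split.
    + destruct HM as [m].
      apply NNPP. intros Hn.
      apply (Hini m (fun _ => False)).
      * intros x y Hx _. exact Hx.
      * intros x Hx. apply Hn. constructor. exact (exist _ x Hx).
    + pose (f := fix f (w : free_magma A) : M :=
                  match w with
                  | fm_leaf a => proj1_sig a
                  | fm_node u v => op (f u) (f v)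
                  end).
      exists f. split; [|split].
      * intros x y. reflexivity.
      * intros u. induction u as [a|u1 IH1 u2 IH2]; intros v; destruct v as [b|v1 v2]; simpl.
        -- intros H. destruct a as [a Ha], b as [b Hb]; simpl in H. subst b.
           f_equal. f_equal. apply proof_irrelevance.
        -- intros H. destruct a as [a Ha]; simpl in H. exfalso. apply Ha. eauto.
        -- intros H. destruct b as [b Hb]; simpl in H. exfalso. apply Hb. eauto.
        -- intros H. apply Heq in H. destruct H as [H1 H2].
           rewrite (IH1 _ H1), (IH2 _ H2). reflexivity.
      * intros z. apply (Hini z (fun z => exists x, f x = z)).
        -- intros x y [u Hu] [v Hv]. exists (fm_node u v). simpl. rewrite Hu, Hv. reflexivity.
        -- intros x Hx. exists (fm_leaf (exist _ x Hx : A)). reflexivity.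
Qed.
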